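(* If $A$ is a finite set of relatively prime positive integers, then there exists an $\mathcal{N}$-set $K\subseteq\mathbb{R}$ such that $A=(K-K)\cap\mathbb{N}$.
   Context: $\mathbb{N}$ denotes the set of positive integers. $K-K=\{x-y : x,y\in K\}$. A set of integers is relatively prime if it is nonempty and its elements have no common factor greater than $1$. An $\mathcal{N}$-set in $\mathbb{R}^n$ is a compact set $K\subseteq\mathbb{R}^n$ such that for every $x\in\mathbb{R}^n$ there exists $y\in K$ with $x-y\in\mathbb{Z}^n$. *)

(* Defs.v *)
From Stdlib Require Export Reals Rtopology List Arith ZArith.
Open Scope R_scope.

Definition rel_prime_set (A : list nat) : Prop :=
  A <> nil /\ forall d : nat, (forall a, In a A -> Nat.divide d a) -> d = 1%nat.

Definition N_set (K : R -> Prop) : Prop :=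
  compact K /\ forall x : R, exists y : R, K y /\ exists z : Z, x - y = IZR z.

(* (K - K) ∩ N, with N = positive integers. *)
Definition diff_pos_nat (K : R -> Prop) (n : nat) : Prop :=
  (0 < n)%nat /\ exists x y : R, K x /\ K y /\ x - y = INR n.

(* Main.v *)
Require Import Defs.
From Stdlib Require Import Lia Lra Znumtheory.
Open Scope R_scope.

Lemma compact_union (P Q : R -> Prop) :
  compact P -> compact Q -> compact (fun x => P x \/ Q x).
Proof.
  intros HP HQ. apply compact_carac in HP as [CP BP].
  apply compact_carac in HQ as [CQ BQ]. apply compact_carac. split.
  - unfold closed_set in *.
    apply open_set_P6 with (intersection_domain (complementary P) (complementary Q)).
    + apply open_set_P3; assumption.
    + split; intros x H; unfold intersection_domain, complementary in *; tauto.
  - destruct BP as [m1 [M1 H1]]. destruct BQ as [m2 [M2 H2]].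
    exists (Rmin m1 m2), (Rmax M1 M2). intros x [Hx|Hx].
    + specialize (H1 x Hx). pose proof (Rmin_l m1 m2). pose proof (Rmax_l M1 M2). lra.
    + specialize (H2 x Hx). pose proof (Rmin_r m1 m2). pose proof (Rmax_r M1 M2). lra.
Qed.

Lemma compact_finunion (P : nat -> R -> Prop) (m : nat) :
  (forall j, (j < m)%nat -> compact (P j)) ->
  compact (fun x => exists j, (j < m)%nat /\ P j x).
Proof.
  induction m; intros H.
  - apply compact_eqDom with (fun _ => False). apply compact_EMP.
    split; intros x Hx; [contradiction| destruct Hx as [j [Hj _]]; lia].
  - apply compact_eqDom with (fun x => (exists j, (j < m)%nat /\ P j x) \/ P m x).
    + apply compact_union. apply IHm. intros; apply H; lia. apply H; lia.
    + split; intros x Hx.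
      * destruct Hx as [[j [Hj Hx]]|Hx]; [exists j; split; [lia|auto]| exists m; split; [lia|auto]].
      * destruct Hx as [j [Hj Hx]]. destruct (Nat.eq_dec j m).
        -- subst; right; auto.
        -- left; exists j; split; [lia|auto].
Qed.

Lemma compact_piece (a b l h : R) :
  compact (fun x => exists t, (l <= t <= h)%R /\ x = (a + t * b)%R).
Proof.
  apply compact_eqDom with (image_dir (fun t => a + t * b) (fun t => l <= t <= h)).
  - apply continuity_compact. 2: apply compact_P3.
    intros x. apply continuity_pt_plus. apply continuity_pt_const. intros u v; reflexivity.
    apply continuity_pt_mult. apply derivable_continuous_pt. apply derivable_pt_id.
    apply continuity_pt_const. intros u v; reflexivity.
  - split; intros x [t [H1 H2]]; exists t; split; auto.
Qed.
Open Scope Z_scope.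

Definition zsum (l : list Z) : Z := fold_right Z.add 0 l.
Lemma zsum_app l1 l2 : zsum (l1 ++ l2) = zsum l1 + zsum l2.
Proof. induction l1; simpl; [lia| rewrite IHl1; lia]. Qed.
Definition negl (l : list Z) := map Z.opp l.
Lemma zsum_neg l : zsum (negl l) = - zsum l.
Proof. induction l; simpl; [lia| unfold negl, zsum in *; simpl; lia]. Qed.
Fixpoint rep (k : nat) (l : list Z) : list Z :=
  match k with O => nil | S k => l ++ rep k l end.
Lemma zsum_rep k l : zsum (rep k l) = Z.of_nat k * zsum l.
Proof. induction k; [reflexivity|]. cbn [rep]. rewrite zsum_app, IHk, Nat2Z.inj_succ; ring. Qed.
Lemma in_rep k l d : In d (rep k l) -> In d l.
Proof. induction k; simpl; [tauto| intros H; apply in_app_or in H; tauto]. Qed.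
Definition scale (v : Z) (l : list Z) :=
  if Z_le_dec 0 v then rep (Z.to_nat v) l else rep (Z.to_nat (-v)) (negl l).
Lemma zsum_scale v l : zsum (scale v l) = v * zsum l.
Proof.
  unfold scale; destruct (Z_le_dec 0 v); rewrite zsum_rep; try rewrite zsum_neg;
  rewrite Z2Nat.id; lia.
Qed.
Lemma in_negl l d : In d (negl l) -> In (- d) l.
Proof. unfold negl; intros H; apply in_map_iff in H as [x [<- Hx]].
  rewrite Z.opp_involutive; auto. Qed.
Lemma in_scale v l d : In d (scale v l) -> In d l \/ In (-d) l.
Proof. unfold scale; destruct (Z_le_dec 0 v); intros H; apply in_rep in H; auto.
  right; apply in_negl; auto. Qed.

Definition good (A : list nat) (d : Z) := d = 0 \/ In (Z.abs_nat d) A.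
Lemma good_opp A d : good A d -> good A (-d).
Proof. unfold good; intros [H|H]; [left; lia| right].
  replace (Z.abs_nat (-d)) with (Z.abs_nat d) by lia; auto. Qed.
Lemma good_cons A a d : good A d -> good (a :: A) d.
Proof. unfold good; simpl; tauto. Qed.

Definition gz (A : list nat) := fold_right (fun a g => Z.gcd (Z.of_nat a) g) 0 A.

Lemma bez A : exists D, zsum D = gz A /\ forall d, In d D -> good A d.
Proof.
  induction A as [|a A IH].
  - exists nil; split; [reflexivity| intros d []].
  - destruct IH as [D [HD Hg]].
    destruct (Zis_gcd_bezout _ _ _ (Zgcd_is_gcd (Z.of_nat a) (gz A))) as [u v Huv].
    exists (scale u (Z.of_nat a :: nil) ++ scale v D). split.
    + rewrite zsum_app, !zsum_scale, HD. simpl. lia.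
    + intros d Hd. apply in_app_or in Hd as [Hd|Hd]; apply in_scale in Hd.
      * right. simpl in Hd. left. destruct Hd as [[H|[]]|[H|[]]]; lia.
      * destruct Hd as [Hd|Hd]; apply good_cons; auto.
        rewrite <- (Z.opp_involutive d). apply good_opp; auto.
Qed.

Lemma gz_div A : forall a, In a A -> Z.divide (gz A) (Z.of_nat a).
Proof.
  induction A as [|b A IH]; simpl; intros a H; [contradiction|].
  destruct H as [<-|H]. apply Z.gcd_divide_l.
  eapply Z.divide_trans. apply Z.gcd_divide_r. auto.
Qed.

Lemma gz_nonneg A : 0 <= gz A.
Proof. destruct A; simpl; [lia| apply Z.gcd_nonneg]. Qed.

Lemma zdiv_natdiv (d a : nat) : Z.divide (Z.of_nat d) (Z.of_nat a) -> Nat.divide d a.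
Proof.
  intros [q Hq]. destruct d as [|d].
  - exists 0%nat. lia.
  - assert (0 <= q) by nia. exists (Z.to_nat q). apply Nat2Z.inj.
    rewrite Nat2Z.inj_mul, Z2Nat.id; lia.
Qed.

Lemma gz_one A : rel_prime_set A -> gz A = 1.
Proof.
  intros [_ H]. assert (Z.to_nat (gz A) = 1%nat).
  { apply H. intros a Ha. apply zdiv_natdiv. rewrite Z2Nat.id by apply gz_nonneg.
    apply gz_div; auto. }
  pose proof (gz_nonneg A). lia.
Qed.

Lemma zsum_firstn_S l j : zsum (firstn (S j) l) - zsum (firstn j l) = nth j l 0.
Proof.
  revert j; induction l as [|x l IH]; intros j.
  - destruct j; reflexivity.
  - destruct j; cbn [firstn nth]. destruct l; unfold zsum; simpl; lia.
    specialize (IH j). unfold zsum in *; simpl in *; lia.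
Qed.

Definition pairs (A : list nat) := flat_map (fun a => Z.of_nat a :: - Z.of_nat a :: nil) A.
Lemma zsum_pairs A : zsum (pairs A) = 0.
Proof. induction A; [reflexivity|]. unfold pairs in *; simpl. unfold zsum in *; simpl in *; lia. Qed.

Lemma walk (A : list nat) : rel_prime_set A ->
  exists (N : nat) (c : nat -> Z), (0 < N)%nat /\ c N = c 0%nat - 1 /\
   (forall j, (j < N)%nat -> good A (c (S j) - c j)) /\
   (forall a, In a A -> exists j, (S j < N)%nat /\ Z.abs_nat (c (S j) - c j) = a).
Proof.
  intros Hrp. destruct (bez A) as [D [HD Hg]]. rewrite gz_one in HD by auto.
  set (L := pairs A ++ negl D ++ 0 :: nil).
  exists (length L), (fun j => zsum (firstn j L)).
  assert (HL : length L = (length (pairs A) + length (negl D) + 1)%nat).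
  { unfold L; rewrite !length_app; simpl; lia. }
  split; [lia|]. split.
  { rewrite firstn_all. simpl. unfold L. rewrite !zsum_app, zsum_pairs, zsum_neg. simpl. lia. }
  split.
  - intros j Hj. rewrite zsum_firstn_S. apply nth_In with (d := 0) in Hj. revert Hj. generalize (nth j L 0). intros e Hj.
    unfold L in Hj. apply in_app_or in Hj as [H|H]; [|apply in_app_or in H as [H|H]].
    + unfold pairs in H. apply in_flat_map in H as [a [Ha Hin]]. right.
      simpl in Hin. destruct Hin as [<-|[<-|[]]]; replace (Z.abs_nat _) with a by lia; auto.
    + apply in_negl in H. rewrite <- (Z.opp_involutive e). apply good_opp; auto.
    + simpl in H. destruct H as [<-|[]]. left; reflexivity.
  - intros a Ha. assert (Hin : In (Z.of_nat a) (pairs A)).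
    { unfold pairs. apply in_flat_map. exists a. simpl; auto. }
    destruct (In_nth _ _ 0 Hin) as [j [Hj Hn]]. exists j. split; [lia|].
    rewrite zsum_firstn_S. unfold L. rewrite app_nth1 by auto. rewrite Hn. lia.
Qed.
Open Scope R_scope.

Definition Kset (N : nat) (c : nat -> Z) (x : R) : Prop :=
  exists j, (j < N)%nat /\ exists t, (INR j <= t <= INR j + 1) /\ x = IZR (c j) + t * / INR N.

Lemma good_in A (n : nat) (d : Z) : good A d -> (0 < n)%nat ->
  (Z.of_nat n = d \/ Z.of_nat n = (- d)%Z) -> In n A.
Proof.
  intros [H|H] Hn Heq. lia. replace n with (Z.abs_nat d) by lia. auto.
Qed.

Lemma construct (A : list nat) (N : nat) (c : nat -> Z) :
  (forall a, In a A -> (0 < a)%nat) ->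
  (0 < N)%nat -> c N = (c 0%nat - 1)%Z ->
  (forall j, (j < N)%nat -> good A (c (S j) - c j)%Z) ->
  (forall a, In a A -> exists j, (S j < N)%nat /\ Z.abs_nat (c (S j) - c j) = a) ->
  exists K, N_set K /\ forall n, In n A <-> diff_pos_nat K n.
Proof.
  intros Hpos HN HcN Hstep Hcov.
  assert (HNr : 0 < INR N) by (apply lt_0_INR; lia).
  exists (Kset N c). split; [split|].
  - apply compact_finunion. intros j _. apply compact_piece.
  - intros x. destruct (base_Int_part x) as [F1 F2].
    set (fr := x - IZR (Int_part x)).
    assert (Hfr : 0 <= fr < 1) by (unfold fr; lra).
    destruct (base_Int_part (INR N * fr)) as [G1 G2].
    set (z := Int_part (INR N * fr)) in *.
    assert (HNf : INR N * fr < INR N) by nra.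
    assert (HNf0 : 0 <= INR N * fr) by nra.
    assert (Hz0 : (0 <= z)%Z). { assert (IZR (-1) < IZR z) by lra. apply lt_IZR in H; lia. }
    assert (HzN : (z < Z.of_nat N)%Z). { apply lt_IZR. rewrite <- INR_IZR_INZ. lra. }
    assert (Hj : INR (Z.to_nat z) = IZR z) by (rewrite INR_IZR_INZ, Z2Nat.id; auto).
    exists (IZR (c (Z.to_nat z)) + fr). split.
    + exists (Z.to_nat z). split; [lia|]. exists (INR N * fr). split; [rewrite Hj; lra|].
      field. lra.
    + exists (Int_part x - c (Z.to_nat z))%Z. rewrite minus_IZR. unfold fr; lra.
  - intros n. split.
    + intros Ha. split; [auto|]. destruct (Hcov n Ha) as [j [Hj Hd]].
      assert (Hp : Kset N c (IZR (c (S j)) + INR (S j) * / INR N)).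
      { exists (S j). split; [lia|]. exists (INR (S j)). split; [lra|auto]. }
      assert (Hq : Kset N c (IZR (c j) + INR (S j) * / INR N)).
      { exists j. split; [lia|]. exists (INR (S j)). rewrite S_INR. split; [lra|auto]. }
      destruct (Z_le_dec 0 (c (S j) - c j)) as [Hs|Hs].
      * exists (IZR (c (S j)) + INR (S j) * / INR N), (IZR (c j) + INR (S j) * / INR N).
        split; [auto|split; [auto|]].
        rewrite (INR_IZR_INZ n). replace (Z.of_nat n) with (c (S j) - c j)%Z by lia.
        rewrite minus_IZR. lra.
      * exists (IZR (c j) + INR (S j) * / INR N), (IZR (c (S j)) + INR (S j) * / INR N).
        split; [auto|split; [auto|]].
        rewrite (INR_IZR_INZ n). replace (Z.of_nat n) with (c j - c (S j))%Z by lia.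
        rewrite minus_IZR. lra.
    + intros [Hn [x [y [[i [Hi [s [Hs Hx]]]] [[j [Hj [u [Hu Hy]]]] Hxy]]]]].
      set (k := (Z.of_nat n - c i + c j)%Z).
      assert (E : s - u = INR N * IZR k).
      { unfold k. rewrite plus_IZR, minus_IZR, <- INR_IZR_INZ. rewrite <- Hxy, Hx, Hy. field. lra. }
      assert (E2 : INR N * IZR k = IZR (Z.of_nat N * k)) by (rewrite mult_IZR, <- INR_IZR_INZ; auto).
      rewrite INR_IZR_INZ in Hs, Hu.
      assert (L1 : IZR (Z.of_nat i - Z.of_nat j - 1) <= IZR (Z.of_nat N * k)) by (rewrite <- E2, !minus_IZR; lra).
      assert (L2 : IZR (Z.of_nat N * k) <= IZR (Z.of_nat i - Z.of_nat j + 1)) by (rewrite <- E2, plus_IZR, minus_IZR; lra).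
      apply le_IZR in L1. apply le_IZR in L2.
      assert (Hk : k = (Z.of_nat n - c i + c j)%Z) by reflexivity. clearbody k.
      assert (Hk1 : (-1 <= k <= 1)%Z) by nia.
      assert (Hc : (k = -1 \/ k = 0 \/ k = 1)%Z) by lia.
      destruct Hc as [Hc|[Hc|Hc]]; subst k.
      * assert (i = 0%nat /\ j = (N - 1)%nat) as [-> ->] by lia.
        apply (good_in A n (c (S (N-1)%nat) - c (N-1)%nat)%Z); [apply Hstep; lia| exact Hn|].
        left. replace (S (N - 1))%nat with N by lia. lia.
      * destruct (Nat.eq_dec i j) as [->|Hij]; [lia|].
        assert (i = S j \/ j = S i) as [->| ->] by lia.
        -- apply (good_in A n (c (S j) - c j)%Z); [apply Hstep; lia| exact Hn| lia].
        -- apply (good_in A n (c (S i) - c i)%Z); [apply Hstep; lia| exact Hn| lia].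
      * assert (j = 0%nat /\ i = (N - 1)%nat) as [-> ->] by lia.
        apply (good_in A n (c (S (N-1)%nat) - c (N-1)%nat)%Z); [apply Hstep; lia| exact Hn|].
        right. replace (S (N - 1))%nat with N by lia. lia.
Qed.

Theorem mainTheorem4 (A : list nat)
  (Hpos : forall a, In a A -> (0 < a)%nat)
  (Hrp : rel_prime_set A) :
  exists K : R -> Prop, N_set K /\ forall n : nat, In n A <-> diff_pos_nat K n.
Proof.
  destruct (walk A Hrp) as [N [c [HN [HcN [Hst Hcov]]]]].
  eapply construct; eauto.
Qed.
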